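(* Let $X$ be a countable set and let $w$ be an essentially locally finite weight on $X$ which is geodesically complete. Then for every $x,y\in X$ there is a $w$-geodesic from $x$ to $y$.
   Context: A weight on $X$ is a symmetric function $w:X\times X\to[0,\infty]$ with $w(x,y)=0$ iff $x=y$; it is essentially locally finite if $\#\{y\in X\mid w(x,y)<R\}<\infty$ for all $x\in X$, $R>0$. A path from $x$ to $y$ is a finite sequence $(x_0,\dots,x_n)$ of pairwise distinct elements of $X$ with $x_0=x$, $x_n=y$; an infinite path is a sequence $(x_0,x_1,\dots)$ of pairwise distinct elements. The $w$-length is $l_w=\sum_i w(x_{i-1},x_i)$ (finite or infinite sum), and $\delta_w(x,y)$ is the infimum of $l_w$ over all paths from $x$ to $y$. A $w$-geodesic from $x$ to $y$ is a path with $l_w(\gamma)=\delta_w(x,y)$; an infinite path $(x_0,x_1,\dots)$ is an infinite $w$-geodesic if $(x_0,\dots,x_n)$ is a $w$-geodesic for every $n$. $w$ is geodesically complete if every infinite $w$-geodesic has infinite $w$-length. *)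

(* Defs.v *)
From HB Require Import structures.
From mathcomp Require Import all_boot all_order all_algebra.
From mathcomp Require Import all_classical all_reals all_analysis.
Set Implicit Arguments. Unset Strict Implicit. Unset Printing Implicit Defensive.
Import Order.TTheory GRing.Theory Num.Theory.
Local Open Scope classical_set_scope.
Local Open Scope ereal_scope.

Section WeightDefs.
Variables (R : realType) (X : countType) (w : X -> X -> \bar R).

Definition is_weight : Prop :=
  [/\ (forall x y, w x y = w y x), (forall x y, 0 <= w x y)
    & (forall x y, w x y = 0 <-> x = y)].

Definition ess_loc_finite : Prop :=
  forall (x : X) (r : R), (0 < r)%R -> finite_set [set y | w x y < r%:E].

Definition is_path (x y : X) (p : seq X) : Prop :=
  [/\ (0 < size p)%N, head x p = x, last x p = y & uniq p].

Definition lw (p : seq X) : \bar R :=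
  \sum_(e <- zip p (behead p)) w e.1 e.2.

Definition delta (x y : X) : \bar R :=
  ereal_inf [set lw p | p in [set p | is_path x y p]].

Definition is_geodesic (x y : X) (p : seq X) : Prop :=
  is_path x y p /\ lw p = delta x y.

Definition is_inf_path (p : nat -> X) : Prop := injective p.

Definition lw_inf (p : nat -> X) : \bar R :=
  \sum_(0 <= k <oo) w (p k) (p k.+1).

Definition is_inf_geodesic (p : nat -> X) : Prop :=
  is_inf_path p /\ forall n, is_geodesic (p 0%N) (p n) (mkseq p n.+1).

Definition geod_complete : Prop :=
  forall p : nat -> X, is_inf_geodesic p -> lw_inf p = +oo.

End WeightDefs.

(* Main.v *)
Require Import Defs.
From mathcomp Require Import all_boot all_order all_algebra.
From mathcomp Require Import all_classical all_reals all_analysis.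
From mathcomp Require Import lra zify.
Import Order.TTheory GRing.Theory Num.Theory.
Set Implicit Arguments. Unset Strict Implicit. Unset Printing Implicit Defensive.
Local Open Scope classical_set_scope.
Local Open Scope ereal_scope.

Section Basic.
Variables (R : realType) (X : countType) (w : X -> X -> \bar R).
Hypothesis w0 : forall a b, 0 <= w a b.

Lemma lw0 : lw w [::] = 0. Proof. by rewrite /lw /= big_nil. Qed.
Lemma lw1 u : lw w [:: u] = 0. Proof. by rewrite /lw /= big_nil. Qed.
Lemma lw2 u v s : lw w (u :: v :: s) = w u v + lw w (v :: s).
Proof. by rewrite /lw /= big_cons. Qed.

Lemma lw_ge0 p : 0 <= lw w p.
Proof.
elim: p => [|u p IH]; first by rewrite lw0.
case: p IH => [|v p] IH; first by rewrite lw1.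
by rewrite lw2 adde_ge0.
Qed.

Lemma lw_cat a z t : lw w (a ++ z :: t) = lw w (rcons a z) + lw w (z :: t).
Proof.
elim: a => [|u a IH]; first by rewrite /= lw1 add0e.
case: a IH => [|v a] IH; first by rewrite /= !lw2 lw1 adde0.
by rewrite /= lw2 -/(cat (v :: a) (z :: t)) IH lw2 addeA.
Qed.

Lemma lw_rcons2 a u v : lw w (rcons (rcons a u) v) = lw w (rcons a u) + w u v.
Proof. by rewrite -cats1 cat_rcons lw_cat lw2 lw1 adde0. Qed.

Lemma lw_prefix q s : lw w q <= lw w (q ++ s).
Proof.
case/lastP: q => [|q u]; first by rewrite lw0 lw_ge0.
by rewrite cat_rcons lw_cat leeDl // lw_ge0.
Qed.

Lemma notuniq_split (p : seq X) : ~~ uniq p ->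
  exists a z b c, p = a ++ z :: b ++ z :: c.
Proof.
elim: p => [|u p IH] //=; rewrite negb_and negbK => /orP [/splitPr [p1 p2]|/IH].
  by exists [::], u, p1, p2.
by move=> [a [z [b [c ->]]]]; exists (u :: a), z, b, c.
Qed.

Lemma erase x y p : (0 < size p)%N -> head x p = x -> last x p = y ->
  exists p', is_path x y p' /\ lw w p' <= lw w p.
Proof.
move: {2}(size p) (leqnn (size p)) => n; elim: n p => [|n IH] p.
  by rewrite leqn0 => /eqP ->.
move=> Hs Hp Hh Hl.
have [Hu|Hnu] := boolP (uniq p); first by exists p; split.
have [a [z [b [c E]]]] := notuniq_split Hnu.
have H1 : (size (a ++ z :: c) <= n)%N.
  move: Hs; rewrite E !size_cat /= size_cat /=; lia.
have H2 : (0 < size (a ++ z :: c))%N by rewrite size_cat /= addnS.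
have H3 : head x (a ++ z :: c) = x by move: Hh; rewrite E; case: a {E H1 H2}.
have H4 : last x (a ++ z :: c) = y.
  by move: Hl; rewrite E !last_cat /= last_cat /=.
have [p' [Hp' Hle]] := IH _ H1 H2 H3 H4.
exists p'; split => //; apply: (le_trans Hle).
rewrite E lw_cat [in X in _ <= X]lw_cat -cat_cons lw_cat.
by apply: leeD2l; rewrite leeDr // lw_ge0.
Qed.

Lemma delta_le x y p : is_path x y p -> delta w x y <= lw w p.
Proof. by move=> Hp; apply: ereal_inf_lbound; exists p. Qed.

Lemma delta_ge0 x y : 0 <= delta w x y.
Proof. by apply: le_ereal_inf_tmp => _ [p _ <-]; apply: lw_ge0. Qed.

End Basic.

Lemma foldr_min (R : realType) (X : eqType) (f : X -> R) (b : R) (s : seq X) :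
  (0 < b)%R -> (forall v, 0 < f v)%R ->
  let m := foldr (fun v m => Num.min (f v) m) b s in
  [/\ (0 < m)%R, (m <= b)%R & forall v, v \in s -> (m <= f v)%R].
Proof.
move=> hb hf; elim: s => [|u s [IH1 IH2 IH3]] /=; first by split.
split.
- by rewrite lt_min hf IH1.
- by rewrite ge_min IH2 orbT.
- move=> v; rewrite inE => /orP [/eqP ->|/IH3 H]; first by rewrite ge_min lexx.
  by rewrite ge_min H orbT.
Qed.

Lemma fin_bound (R : realType) (z : \bar R) (B : R) : 0 <= z -> z <= B%:E ->
  exists a : R, z = a%:E.
Proof. by case: z => [a| |] //; exists a. Qed.

Fixpoint build (T : Type) (st : seq T -> T) (x : T) (n : nat) : seq T :=
  if n is k.+1 then rcons (build st x k) (st (build st x k)) else [:: x].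

Section Main.
Variables (R : realType) (X : countType) (w : X -> X -> \bar R).
Hypothesis w0 : forall a b, 0 <= w a b.
Hypothesis hf : ess_loc_finite w.
Variables (x y : X) (d : R).
Hypothesis hD : delta w x y = d%:E.
Hypothesis hd0 : (0 <= d)%R.
Hypothesis Hng : forall p, ~ is_geodesic w x y p.

Definition G q := (0 < size q)%N /\ forall e : R, (0 < e)%R ->
  exists p s, [/\ is_path x y p, p = q ++ s & lw w p < (d + e)%:E].

Lemma G_le q : G q -> lw w q <= d%:E.
Proof.
case=> _ HG; apply/lee_addgt0Pr => e he.
have [p [s [_ -> Hlt]]] := HG e he.
by rewrite -EFinD; apply: le_trans (lw_prefix w0 q s) (ltW Hlt).
Qed.

Lemma G_init : G [:: x].
Proof.
split=> // e he.
have : delta w x y < (d + e)%:E by rewrite hD lte_fin ltrDl.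
case/ereal_inf_lt => _ [p Hp <-] Hlt.
exists p, (behead p); split => //.
by case: Hp; case: p {Hlt} => [|u p] //= _ ->.
Qed.

Lemma step q : G q -> exists v, G (rcons q v).
Proof.
move=> [Hq HG]; apply: contrapT => /forallNP Hn.
have H1 : forall v, exists e : R, (0 < e)%R /\ forall p s, is_path x y p ->
    p = rcons q v ++ s -> (d + e)%:E <= lw w p.
  move=> v; apply: contrapT => Hne; apply: (Hn v).
  split; first by rewrite size_rcons.
  move=> e he; apply: contrapT => Hne2; apply: Hne.
  exists e; split=> // p s Hp Hps; rewrite leNgt; apply/negP => Hlt.
  by apply: Hne2; exists p, s.
have [ev Hev] := choice H1.
have [e0 [He0 He0q]] : exists e0 : R, (0 < e0)%R /\
    (is_path x y q -> (d + e0)%:E <= lw w q).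
  case: (pselect (is_path x y q)) => Hpq; last by exists 1%R.
  have Hge := delta_le w Hpq; rewrite hD in Hge.
  have Hne : lw w q != d%:E.
    apply/negP => /eqP E; case: (@Hng q); split => //; by rewrite E hD.
  move: Hge Hne; case: (lw w q) => [a| |] //.
  - rewrite lee_fin => Hda /eqP Hne; exists (a - d)%R; split.
      by rewrite subr_gt0 lt_neqAle Hda andbT; apply/eqP => E; apply: Hne; rewrite E.
    by move=> _; rewrite addrC subrK.
  - by move=> _ _; exists 1%R; split => // _; apply: leey.
have hV := hf (last x q) (ltr_wpDl hd0 ltr01).
have [sV HsV] := (finite_seqP _).1 hV.
have Hevpos : forall v, (0 < ev v)%R by move=> v; case: (Hev v).
have Hb : (0 < Num.min 1 e0)%R by rewrite lt_min ltr01 He0.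
have [Hm1 Hm2 Hm3] := foldr_min sV Hb Hevpos.
set m := foldr _ _ sV in Hm1 Hm2 Hm3.
have [p [s [Hp Eps Hlt]]] := HG m Hm1.
have Hm1' : (m <= 1)%R by apply: (le_trans Hm2); rewrite ge_min lexx.
have Hm0 : (m <= e0)%R by apply: (le_trans Hm2); rewrite ge_min lexx orbT.
case: s Eps => [|v s] Eps.
  rewrite cats0 in Eps; subst p.
  have := le_lt_trans (He0q Hp) Hlt; rewrite lte_fin ltrD2l.
  by rewrite ltNge Hm0.
have Hwv : w (last x q) v <= lw w p.
  rewrite Eps; case/lastP: q Hq {HG Hn H1 Hev He0q hV HsV Eps Hp Hlt} => [|q u] // _.
  rewrite cat_rcons lw_cat lw2 last_rcons.
  by rewrite addeC -addeA; apply: leeDl; rewrite adde_ge0 // lw_ge0.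
have Hvin : v \in sV.
  have : [set v | w (last x q) v < (d + 1)%:E] v.
    rewrite /=; apply: le_lt_trans Hwv (lt_le_trans Hlt _).
    by rewrite lee_fin lerD2l.
  by rewrite HsV.
have := Hm3 v Hvin => Hmv.
case: (Hev v) => _ /(_ p s Hp) Hle.
have Hle' : (d + ev v)%:E <= lw w p by apply: Hle; rewrite Eps cat_rcons.
have := le_lt_trans Hle' Hlt.
by rewrite lte_fin ltrD2l ltNge Hmv.
Qed.


Hypothesis hgc : geod_complete w.

Lemma no_geo_false : False.
Proof.
have Hst0 : forall q : seq X, exists v : X, G q -> G (rcons q v).
  move=> q; case: (pselect (G q)) => Gq; last by exists x.
  by have [v Hv] := step Gq; exists v.
have [st Hst] := choice Hst0.
pose qs := build st x.
have Gq : forall n, G (qs n).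
  by elim => [|n IH] /=; [exact: G_init | exact: Hst].
pose f n := last x (qs n).
have Eq : forall n, qs n = mkseq f n.+1.
  elim => [|n IH] //; rewrite mkseqS -IH /f /= last_rcons //.
have Uq : forall n, uniq (qs n).
  move=> n; have [_ /(_ 1%R ltr01) [p [s [[_ _ _ Hu] Eps _]]]] := Gq n.
  by move: Hu; rewrite Eps cat_uniq => /andP[].
have Hinj : injective f.
  move=> i j Hij; have := Uq (maxn i j); rewrite Eq => /mkseq_uniqP H.
  by apply: H => //; rewrite inE ltnS ?leq_maxl ?leq_maxr.
have Hpath : forall n, is_path x (f n) (qs n).
  move=> n; have [Hs /(_ 1%R ltr01) [p [s [[_ Hh _ Hu] Eps _]]]] := Gq n.
  split => //.
  by move: Hh; rewrite Eps; case: (qs n) Hs.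
have Hgeo : forall n, lw w (qs n) = delta w x (f n).
  move=> n; apply/le_anti/andP; split; last exact: delta_le (Hpath n).
  apply: le_ereal_inf_tmp => _ [r Hr <-].
  rewrite leNgt; apply/negP => Hlt.
  have [a Ea] := fin_bound (lw_ge0 w0 (qs n)) (G_le (Gq n)).
  have [b Eb] := fin_bound (lw_ge0 w0 r) (ltW (lt_le_trans Hlt (G_le (Gq n)))).
  have ha : (0 <= a)%R by rewrite -lee_fin -Ea lw_ge0.
  have hb : (0 <= b)%R by rewrite -lee_fin -Eb lw_ge0.
  rewrite Ea Eb lte_fin in Hlt.
  have [Hs HG] := Gq n.
  have [p [s [Hp Eps Hlp]]] : exists p s, [/\ is_path x y p, p = qs n ++ s
      & lw w p < (d + (a - b))%:E] by apply: HG; rewrite subr_gt0.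
  case/lastP E: (qs n) Hs Eps Ea => [|q' u] // _ Eps Ea.
  have Hu : u = f n by rewrite /f E last_rcons.
  rewrite cat_rcons in Eps.
  have Hlp' : lw w p = a%:E + lw w (u :: s) by rewrite Eps lw_cat Ea.
  have Hus : lw w (u :: s) <= lw w p by rewrite Hlp' leeDr // lee_fin.
  have [c Ec] := fin_bound (lw_ge0 w0 (u :: s)) (le_trans Hus (ltW Hlp)).
  rewrite Hlp' Ec -EFinD lte_fin in Hlp.
  case: Hr => Hrs Hrh Hrl Hru.
  case/lastP Er: r Hrs Hrh Hrl Eb => [|r' u'] // _ Hrh Hrl Eb.
  rewrite last_rcons -Hu in Hrl; subst u'.
  have H1 : (0 < size (r' ++ u :: s))%N by rewrite size_cat addnS.
  have H2 : head x (r' ++ u :: s) = x by move: Hrh; case: (r') => [|z r''].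
  have H3 : last x (r' ++ u :: s) = y by case: Hp => _ _ <- _; rewrite Eps !last_cat.
  have [r3 [Hr3 Hle3]] := erase w0 H1 H2 H3.
  have := le_trans (delta_le w Hr3) Hle3.
  rewrite hD lw_cat Eb Ec -EFinD lee_fin => Hdc.
  lra.
have Hsum : forall n, (\sum_(0 <= k < n) w (f k) (f k.+1)) = lw w (mkseq f n.+1).
  elim => [|n IH]; first by rewrite big_geq // lw1.
  by rewrite big_nat_recr //= IH !mkseqS lw_rcons2.
have Hle : lw_inf w f <= d%:E.
  rewrite /lw_inf; apply: lime_le; first exact: is_cvg_nneseries.
  apply: nearW => -[|n]; first by rewrite big_geq // lee_fin.
  by rewrite Hsum -Eq; exact: G_le.
have Hgeod : is_inf_geodesic w f.
  split => // n; have -> : f 0%N = x by [].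
  by rewrite -Eq; split; [exact: Hpath | exact: Hgeo].
by move: Hle; rewrite (hgc Hgeod).
Qed.

End Main.

Unset Implicit Arguments.
Theorem lemma2p5 (R : realType) (X : countType) (w : X -> X -> \bar R) :
  is_weight w -> ess_loc_finite w -> geod_complete w ->
  forall x y : X, exists p : seq X, is_geodesic w x y p.
Proof.
move=> [Hsym H0 Heq] hf hgc x y; apply: contrapT => /forallNP Hng.
have := delta_ge0 H0 x y; case E: (delta w x y) => [d| |] // hd0.
  rewrite lee_fin in hd0.
  exact: (no_geo_false H0 hf E hd0 Hng hgc).
pose p0 := if x == y then [:: x] else [:: x; y].
have Hp0 : is_path x y p0.
  rewrite /p0; case: eqP => [<-|Hne]; split => //=.
  by rewrite inE andbT; apply/eqP.
apply: (Hng p0); split => //; rewrite E; apply/eqP; rewrite eq_le leey /= -E.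
exact: delta_le.
Qed.
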